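(* In the three-door Monty Hall game described in the context, let $Q$ be a fully supported mixed strategy of Monte, and let $\pi_\theta=Q(\{(\theta,d):d\neq\theta\})$ for $\theta\in\{1,2,3\}$. Then every pure Bayesian strategy for $Q$ is always-switching, so every Bayesian strategy for $Q$ is a mixture of always-switching strategies. Moreover, if (after relabeling the doors) $\pi_1\ge\pi_2\ge\pi_3>0$, the pure Bayesian strategies are exactly: (1) $3\,\mathrm{s}\,\mathrm{s}$ alone if $\pi_1\ge\pi_2>\pi_3$; (2) $2\,\mathrm{s}\,\mathrm{s}$ and $3\,\mathrm{s}\,\mathrm{s}$ if $\pi_1>\pi_2=\pi_3$; (3) $1\,\mathrm{s}\,\mathrm{s}$, $2\,\mathrm{s}\,\mathrm{s}$ and $3\,\mathrm{s}\,\mathrm{s}$ if $\pi_1=\pi_2=\pi_3=1/3$.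
   Context: Doors are numbered $1,2,3$. A pure strategy of Monte is a pair $(\theta,d)$ with $\theta\in\{1,2,3\}$ (the door hiding the prize) and $d\in\{1,2,3\}\setminus\{\theta\}$ (six strategies). A pure strategy of Conie is a triple $x\,a\,b$ with $x\in\{1,2,3\}$ and $a,b\in\{\mathrm{h},\mathrm{s}\}$ (twelve strategies). Under the profile $((\theta,d),x\,a\,b)$: Monte offers door $y=\theta$ if $x\neq\theta$ and $y=d$ if $x=\theta$; Conie's action is $a$ if $y$ is the smaller of the two doors in $\{1,2,3\}\setminus\{x\}$ and $b$ otherwise; her final choice is $z=x$ for action $\mathrm{h}$ and $z=y$ for action $\mathrm{s}$; she wins (payoff 1) iff $z=\theta$, else payoff 0. Strategies $x\,\mathrm{s}\,\mathrm{s}$ are always-switching. A mixed strategy is a probability distribution on pure strategies; it is fully supported if every pure strategy has positive probability. For a mixed strategy $Q$ of Monte, a (mixed) strategy $P$ of Conie is Bayesian if it maximizes Conie's winning probability $\sum_{A,S}P(A)Q(S)C(A,S)$ over all mixed strategies of Conie (with $P$, $Q$ independent); a pure Bayesian strategy is a pure strategy with this property. *)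

(* Defs.v *)
(* Doors 1,2,3 are represented by the ordinals 0,1,2 of 'I_3
   (order-preserving relabeling, so "smaller door" is unchanged). *)
From mathcomp Require Import all_boot all_order all_algebra.
Set Implicit Arguments. Unset Strict Implicit. Unset Printing Implicit Defensive.
Import Order.TTheory GRing.Theory Num.Theory.
Local Open Scope ring_scope.

Notation door := 'I_3.

Definition act := bool.
Definition hold : act := false.
Definition switch : act := true.

Definition monte := {p : door * door | p.1 != p.2}.
Definition theta_of (S : monte) : door := (val S).1.
Definition d_of (S : monte) : door := (val S).2.

Definition conie := (door * act * act)%type.

Definition offered (S : monte) (x : door) : door :=
  if x != theta_of S then theta_of S else d_of S.

Definition is_smaller_other (x y : door) : bool :=
  (y != x) && [forall w : door, ((w != x) && (w != y)) ==> (y < w)%N].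

Definition final_choice (A : conie) (S : monte) : door :=
  let: (x, a, b) := A in
  let y := offered S x in
  let c := if is_smaller_other x y then a else b in
  if c == switch then y else x.

Definition payoff {R : numDomainType} (A : conie) (S : monte) : R :=
  (final_choice A S == theta_of S)%:R.

Definition always_switching (A : conie) : bool :=
  (A.1.2 == switch) && (A.2 == switch).

Definition mixed {R : numDomainType} {T : finType} (P : {ffun T -> R}) : Prop :=
  (forall t, 0 <= P t) /\ \sum_t P t = 1.

Definition fully_supported {R : numDomainType} {T : finType} (P : {ffun T -> R}) : Prop :=
  mixed P /\ forall t, 0 < P t.

Definition win_prob {R : numDomainType} (P : {ffun conie -> R}) (Q : {ffun monte -> R}) : R :=
  \sum_A \sum_S P A * Q S * payoff A S.

Definition bayesian {R : numDomainType} (Q : {ffun monte -> R}) (P : {ffun conie -> R}) : Prop :=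
  mixed P /\ forall P' : {ffun conie -> R}, mixed P' -> win_prob P' Q <= win_prob P Q.

Definition pure_mixed {R : numDomainType} (A : conie) : {ffun conie -> R} :=
  [ffun B => (B == A)%:R].

Definition pure_bayesian {R : numDomainType} (Q : {ffun monte -> R}) (A : conie) : Prop :=
  bayesian Q (pure_mixed A).

Definition prior {R : numDomainType} (Q : {ffun monte -> R}) (th : door) : R :=
  \sum_(S | theta_of S == th) Q S.

(* Main.v *)
Require Import Defs.
From mathcomp Require Import all_boot all_order all_algebra.
From mathcomp Require Import lra.
Import Order.TTheory GRing.Theory Num.Theory.
Local Open Scope ring_scope.

Notation d0 := (@ord0 2 : door).
Notation d1 := (@lift 3 ord0 ord0 : door).
Notation d2 := (@lift 3 ord0 (lift ord0 ord0) : door).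

Lemma door3 (x : door) : [\/ x = d0, x = d1 | x = d2].
Proof.
case: x => [[|[|[|n]]] h].
- by constructor 1; apply: val_inj.
- by constructor 2; apply: val_inj.
- by constructor 3; apply: val_inj.
- by [].
Qed.

Definition m01 : monte := exist _ (d0, d1) isT.
Definition m02 : monte := exist _ (d0, d2) isT.
Definition m10 : monte := exist _ (d1, d0) isT.
Definition m12 : monte := exist _ (d1, d2) isT.
Definition m20 : monte := exist _ (d2, d0) isT.
Definition m21 : monte := exist _ (d2, d1) isT.

Lemma sum_monte (R : realFieldType) (F : monte -> R) :
  \sum_S F S = F m01 + F m02 + (F m10 + F m12 + (F m20 + F m21)).
Proof.
pose G (p : door * door) := oapp F 0 (insub p).
have -> : \sum_S F S = \sum_(p : door * door | p.1 != p.2) G p.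
  rewrite [RHS](reindex_omap (val : monte -> door * door) insub); last by move=> p hp; rewrite insubT.
  apply: eq_big => [S|S _]; first by rewrite (valP S) valK eqxx.
  by rewrite /G valK.
have -> : \sum_(p : door * door | p.1 != p.2) G p = \sum_(i : door) \sum_(j : door | i != j) G (i,j).
  by rewrite pair_big_dep; apply: eq_bigr => -[].
rewrite !big_ord_recl !big_ord0 /=.
do 3! rewrite big_mkcond !big_ord_recl !big_ord0 /=.
rewrite !add0r !addr0 /G.
by rewrite !insubT /=; do !congr (_ + _); congr F; apply: val_inj.
Qed.

Lemma forall3 (P : pred door) : [forall w, P w] = [&& P d0, P d1 & P d2].
Proof.
apply/forallP/and3P => [H|[h0 h1 h2] w]; first by split; apply: H.
by case: (door3 w) => ->.
Qed.

Definition iso' (x y : door) : bool :=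
  (y != x) && [&& ((d0 != x) && (d0 != y)) ==> (y < d0)%N,
                  ((d1 != x) && (d1 != y)) ==> (y < d1)%N &
                  ((d2 != x) && (d2 != y)) ==> (y < d2)%N].

Definition pt (A : conie) (S : monte) : bool :=
  let: (x, a, b) := A in
  let y := offered S x in
  let c := if iso' x y then a else b in
  (if c == switch then y else x) == theta_of S.

Lemma payoff_eq (R : numDomainType) A S : payoff A S = (pt A S)%:R :> R.
Proof.
by case: A => [[x a] b]; rewrite /payoff /pt /final_choice /is_smaller_other forall3.
Qed.

Section W.
Variable (R : realFieldType) (Q : {ffun monte -> R}).
Definition W (A : conie) : R := \sum_S Q S * payoff A S.
Definition Wf (x : door) (a b : bool) : R :=
  match val x with
  | 0%N => (if a then Q m10 + Q m12 else Q m01) + (if b then Q m20 + Q m21 else Q m02)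
  | 1%N => (if a then Q m01 + Q m02 else Q m10) + (if b then Q m20 + Q m21 else Q m12)
  | _ => (if a then Q m01 + Q m02 else Q m20) + (if b then Q m10 + Q m12 else Q m21)
  end.
Lemma W_eq x a b : W (x, a, b) = Wf x a b.
Proof.
rewrite /W sum_monte !payoff_eq.
case: (door3 x) => ->; case: a; case: b; rewrite /pt /Wf /= ?mulr1 ?mulr0 ?addr0 ?add0r; lra.
Qed.
End W.
Arguments W {R} Q A.
Arguments Wf {R} Q x a b.
Arguments W_eq {R} Q x a b.

Lemma win_probE (R : realFieldType) (P : {ffun conie -> R}) (Q : {ffun monte -> R}) :
  win_prob P Q = \sum_A P A * W Q A.
Proof.
rewrite /win_prob; apply: eq_bigr => A _; rewrite /W mulr_sumr.
by apply: eq_bigr => S _; rewrite mulrA.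
Qed.

Lemma pure_mixedP (R : realFieldType) (A : conie) : mixed (pure_mixed A : {ffun conie -> R}).
Proof.
split; first by move=> B; rewrite ffunE ler0n.
rewrite (bigD1 A) //= ffunE eqxx big1 ?addr0 // => B /negbTE HB.
by rewrite ffunE HB.
Qed.

Lemma win_pure (R : realFieldType) (Q : {ffun monte -> R}) A :
  win_prob (pure_mixed A) Q = W Q A.
Proof.
rewrite win_probE (bigD1 A) //= ffunE eqxx mul1r big1 ?addr0 // => B /negbTE HB.
by rewrite ffunE HB mul0r.
Qed.

Lemma pb_iff (R : realFieldType) (Q : {ffun monte -> R}) A :
  pure_bayesian Q A <-> (forall B, W Q B <= W Q A).
Proof.
split.
  by move=> [_ H] B; rewrite -!win_pure; apply: H; apply: pure_mixedP.
move=> H; split; first exact: pure_mixedP.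
move=> P' [P0 P1]; rewrite win_pure win_probE.
apply: le_trans (_ : \sum_A P' A * W Q A <= \sum_A P' A * W Q A) _ => //.
have -> : W Q A = \sum_B P' B * W Q A by rewrite -mulr_suml P1 mul1r.
by apply: ler_sum => B _; apply: ler_wpM2l.
Qed.

Lemma prior_eq (R : realFieldType) (Q : {ffun monte -> R}) x :
  prior Q x = match val x with
              | 0%N => Q m01 + Q m02
              | 1%N => Q m10 + Q m12
              | _ => Q m20 + Q m21 end.
Proof.
rewrite /prior big_mkcond sum_monte.
by case: (door3 x) => -> /=; rewrite ?addr0 ?add0r.
Qed.

Ltac specW H := 
  have := H (d0, true, true); have := H (d1, true, true); have := H (d2, true, true);
  rewrite !W_eq /Wf /=.

Lemma door_cover (a b c : door) : [/\ a != b, b != c & a != c] ->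
  forall y, [\/ y = a, y = b | y = c].
Proof.
move=> H y; move: H.
case: (door3 a) => ->; case: (door3 b) => ->; case: (door3 c) => ->;
  case: (door3 y) => -> /= -[] //; 
  first [by constructor 1 | by constructor 2 | by constructor 3].
Qed.

Lemma W_le (R : realFieldType) (Q : {ffun monte -> R}) :
  (forall S, 0 < Q S) -> forall B, exists y, W Q B <= W Q (y, true, true).
Proof.
move=> Qpos [[x u] v] /=.
have E y : W Q (y, true, true) = Wf Q y true true by rewrite W_eq.
rewrite W_eq; setoid_rewrite E.
have p01 := Qpos m01; have p02 := Qpos m02; have p10 := Qpos m10.
have p12 := Qpos m12; have p20 := Qpos m20; have p21 := Qpos m21.
clear Qpos.
case: (door3 x) => ->; case: u; case: v;
  first [exists d0; rewrite /Wf /=; lra | exists d1; rewrite /Wf /=; lra | exists d2; rewrite /Wf /=; lra].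
Qed.

Lemma W_ss (R : realFieldType) (Q : {ffun monte -> R}) :
  Q m01 + Q m02 + (Q m10 + Q m12 + (Q m20 + Q m21)) = 1 ->
  forall x, W Q (x, true, true) = 1 - prior Q x.
Proof.
move=> Qsum x; rewrite W_eq prior_eq.
by case: (door3 x) => -> /=; rewrite /Wf /=; lra.
Qed.

Theorem mainTheorem3 (R : realFieldType) (Q : {ffun monte -> R}) :
  fully_supported Q ->
  (forall A : conie, pure_bayesian Q A -> always_switching A) /\
  (forall P : {ffun conie -> R}, bayesian Q P ->
     forall A : conie, 0 < P A -> always_switching A) /\
  (forall a b c : door, [/\ a != b, b != c & a != c] ->
     prior Q b <= prior Q a -> prior Q c <= prior Q b ->
     [/\ prior Q c < prior Q b ->
           (forall A, pure_bayesian Q A <-> A = (c, switch, switch)),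
         prior Q b < prior Q a -> prior Q b = prior Q c ->
           (forall A, pure_bayesian Q A <->
              A = (b, switch, switch) \/ A = (c, switch, switch))
       & prior Q a = 1 / 3 -> prior Q b = 1 / 3 -> prior Q c = 1 / 3 ->
           (forall A, pure_bayesian Q A <->
              [\/ A = (a, switch, switch), A = (b, switch, switch)
                | A = (c, switch, switch)])]).
Proof.
move=> [[Qge Qsum] Qpos].
have p01 := Qpos m01; have p02 := Qpos m02; have p10 := Qpos m10.
have p12 := Qpos m12; have p20 := Qpos m20; have p21 := Qpos m21.
rewrite sum_monte in Qsum.
have P1 : forall A, pure_bayesian Q A -> always_switching A.
  move=> [[x a] b] /pb_iff H; case: (door3 x) => ?; subst x; move: H;
  case: a; case: b => //= H; specW H; move=> *; exfalso; lra.
split => //; split.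
  move=> P [[P0 P1s] HP] A PA.
  have [B0 _ HB0] := @arg_maxP _ _ conie A xpredT (W Q) isT.
  apply: P1; apply/pb_iff => B.
  have HB : forall B, W Q B <= W Q B0 by move=> B'; apply: HB0.
  have hw := HP _ (pure_mixedP R B0); rewrite win_pure win_probE in hw.
  have hs : \sum_B P B * (W Q B0 - W Q B) = 0.
    apply/eqP; rewrite eq_le; apply/andP; split.
      rewrite (eq_bigr (fun B => P B * W Q B0 - P B * W Q B)); last by move=> *; rewrite mulrBr.
      by rewrite sumrB -mulr_suml P1s mul1r subr_le0.
    by apply: sumr_ge0 => B' _; apply: mulr_ge0 => //; rewrite subr_ge0.
  have nn : forall B', true -> 0 <= P B' * (W Q B0 - W Q B').
    by move=> B' _; apply: mulr_ge0 => //; rewrite subr_ge0.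
  have /eqP := @psumr_eq0P _ conie xpredT _ nn hs A isT.
  by rewrite mulf_eq0 (gt_eqF PA) /= subr_eq0 => /eqP <-.
have charac : forall A, pure_bayesian Q A <->
    exists x, A = (x, true, true) /\ forall y, prior Q x <= prior Q y.
  move=> A; split.
    move=> HA; have := P1 _ HA; move/pb_iff: HA.
    case: A => [[x u] v] H; rewrite /always_switching /= => /andP[/eqP hu /eqP hv].
    subst u v; exists x; split => // y.
    have := H (y, true, true); rewrite !(@W_ss R Q) //; lra.
  move=> [x [-> Hx]]; apply/pb_iff => B.
  have [y Hy] := @W_le R Q Qpos B.
  apply: le_trans Hy _; rewrite !(@W_ss R Q) //.
  have := Hx y; lra.
move=> a b c Habc hab hbc.
have cover := @door_cover a b c Habc.
have key : forall x, (forall y, prior Q x <= prior Q y) <->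
    [/\ prior Q x <= prior Q a, prior Q x <= prior Q b & prior Q x <= prior Q c].
  move=> x; split => [H|[ha hb hc] y]; first by split; apply: H.
  by case: (cover y) => ->.
split => [h1|h1 h2|h1 h2 h3] A; rewrite charac; split.
- move=> [x [-> /key [ha hb hc]]].
  by case: (cover x) => Hx; subst x => //; exfalso; lra.
- by move=> ->; exists c; split => //; apply/key; split; lra.
- move=> [x [-> /key [ha hb hc]]].
  by case: (cover x) => Hx; subst x; [exfalso; lra | left | right].
- by case=> ->; [exists b | exists c]; split => //; apply/key; split; lra.
- move=> [x [-> /key [ha hb hc]]].
  by case: (cover x) => Hx; subst x; [constructor 1 | constructor 2 | constructor 3].
- by case=> ->; [exists a | exists b | exists c]; split => //; apply/key; split; lra.
Qed.
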